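(* Let $\mathbf{A}$ and $\mathbf{B}$ be two deterministic $k$-tuple and $\ell$-tuple of $N\times N$ matrices and $U$ be a Haar distributed unitary matrix. For any $n$ and any $C_1,\ldots,C_n \in \mathbf{A} \cup U\mathbf{B}U^*$, \begin{enumerate} \item for any $\sigma\in S_n$, if there exist two indices $i\neq j$ in the same cycle of $\sigma$ such that $C_i \in \mathbf{A}$ and $C_j \in U\mathbf{B}U^*$, then $\mathbb{E}[\kappa^N_{\sigma}(C_1,\ldots,C_n)]=0$, \item for any $0\leq m \leq n$, any $\sigma_1\in S_m$, any $\sigma_2\in S_{n-m}$, if $C_i \in \mathbf{A}$ for $i\in \{1,\ldots,m\}$ and $C_{j} \in U\mathbf{B}U^*$, i.e. $C_j = UB^{(c_j)}U^*$ for $j\in \{m+1,\ldots,n\}$, then $$\mathbb{E}[\kappa^{N}_{\sigma_1\otimes \sigma_2}(C_1,\ldots,C_n)]= \kappa^N_{\sigma_1}(C_1,\ldots,C_m)\kappa^N_{\sigma_2}\left(B^{(c_{m+1})},\ldots,B^{(c_{n})}\right).$$ \end{enumerate}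
   Context: The symmetric group $S_n$ acts on $(\mathbb{C}^N)^{\otimes n}$ by $\sigma. v_1\otimes\cdots\otimes v_n = v_{\sigma^{-1}(1)}\otimes\cdots\otimes v_{\sigma^{-1}(n)}$, and $\sigma$ also denotes the corresponding endomorphism. For $\sigma\in S_n$, $|\sigma| = n-\#\sigma$ where $\#\sigma$ is the number of cycles of $\sigma$. For matrices $M_1,\ldots,M_n\in M_N(\mathbb{C})$ and $U$ Haar distributed on the unitary group $U(N)$, the matricial cumulants $(\kappa^N_\sigma(\mathbf{M}))_{\sigma\in S_n}$ of $\mathbf{M}=(M_1,\ldots,M_n)$ are the coefficients such that $\mathbb{E}_U[(UM_1U^* )\otimes\cdots\otimes(UM_nU^* )] = \sum_{\sigma\in S_n} N^{-|\sigma|}\kappa^N_\sigma(\mathbf{M})\,\sigma$ in $\mathrm{End}((\mathbb{C}^N)^{\otimes n})$ (uniquely defined when $N\ge n$). When $M_1,\ldots,M_n$ are random, $\mathbb{E}[\kappa^N_\sigma(\mathbf{M})]$ is defined by $\mathbb{E}[(UM_1U^* )\otimes\cdots\otimes(UM_nU^* )] = \sum_{\sigma\in S_n} N^{-|\sigma|}\mathbb{E}[\kappa^N_\sigma(\mathbf{M})]\,\sigma$ with $U$ Haar distributed and independent of $M_1,\ldots,M_n$. For $\sigma_1\in S_m$, $\sigma_2\in S_{n-m}$, $\sigma_1\otimes\sigma_2\in S_n$ is the permutation with $\sigma_1\otimes\sigma_2(i)=\sigma_1(i)$ for $i\le m$ and $\sigma_1\otimes\sigma_2(m+i)=m+\sigma_2(i)$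 for $1\le i\le n-m$. *)

(* Defs.v *)
From HB Require Import structures.
From mathcomp Require Import all_boot all_order all_algebra all_fingroup.
From mathcomp Require Import complex.
From mathcomp Require Import all_classical all_reals all_analysis.

Set Implicit Arguments.
Unset Strict Implicit.
Unset Printing Implicit Defensive.

Import Order.TTheory GRing.Theory Num.Theory.
Import numFieldTopology.Exports numFieldNormedType.Exports.
Local Open Scope ring_scope.

(* The usual (norm) topology on R[i], hence on matrices over R[i]
   (and products of these), used to talk about continuous test functions. *)
HB.instance Definition _ (R : rcfType) := PseudoPointedMetric.copy R[i] (R[i])^o.

Section Defs.
Variable R : realType.
Local Notation C := (R[i]).

Definition adjmx N (M : 'M[C]_N) : 'M[C]_N := (map_mx (@conjc R) M)^T.

Definition unitary N (M : 'M[C]_N) : bool := M *m adjmx M == 1%:M.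

Definition conj_by N (W M : 'M[C]_N) : 'M[C]_N := W *m M *m adjmx W.

(* Endomorphisms of (C^N)^{(x) n} are represented by their matrix entries
   indexed by multi-indices a b : {ffun 'I_n -> 'I_N} (the basis
   e_{a 0} (x) ... (x) e_{a (n-1)}). *)
Definition tensor_mx N n (M : 'I_n -> 'M[C]_N)
    (a b : {ffun 'I_n -> 'I_N}) : C :=
  \prod_(i < n) M i (a i) (b i).

(* The operator of s acting by s.(v_1 (x) .. (x) v_n) =
   v_{s^-1(1)} (x) .. (x) v_{s^-1(n)}: it maps e_b to e_a with a (s k) = b k. *)
Definition perm_op N n (s : 'S_n) (a b : {ffun 'I_n -> 'I_N}) : C :=
  ([forall k, a (s k) == b k])%:R.

Definition perm_len n (s : 'S_n) : nat := (n - #|porbits s|)%N.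

Definition tens_perm_fun m n (s1 : 'S_m) (s2 : 'S_n) (i : 'I_(m + n)) :
    'I_(m + n) :=
  match fintype.split i with
  | inl j => lshift n (s1 j)
  | inr j => rshift m (s2 j)
  end.

Lemma tens_perm_fun_inj m n (s1 : 'S_m) (s2 : 'S_n) :
  injective (tens_perm_fun s1 s2).
Proof.
have E (x : 'I_(m + n)) : tens_perm_fun s1 s2 x = unsplit (match fintype.split x with
   inl j => inl (s1 j) | inr j => inr (s2 j) end).
  by rewrite /tens_perm_fun; case: (fintype.split x).
move=> i j; rewrite !E => /(can_inj unsplitK).
case E1: (fintype.split i) => [a|a]; case E2: (fintype.split j) => [b|b] //= [].
- by move/perm_inj=> eab; apply: (can_inj splitK); rewrite E1 E2 eab.
- by move/perm_inj=> eab; apply: (can_inj splitK); rewrite E1 E2 eab.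
Qed.

Definition tens_perm m n (s1 : 'S_m) (s2 : 'S_n) : 'S_(m + n) :=
  perm (@tens_perm_fun_inj m n s1 s2).

Section Prob.
Context {d : measure_display} {T : measurableType d} (P : probability T R).

Definition Cexpect (f : T -> C) : C :=
  Complex (fine (\int[P]_w (complex.Re (f w))%:E)%E)
          (fine (\int[P]_w (complex.Im (f w))%:E)%E).

Definition random_mx N (X : T -> 'M[C]_N) : Prop :=
  forall i j, measurable_fun setT (fun w => complex.Re (X w i j)) /\
              measurable_fun setT (fun w => complex.Im (X w i j)).

(* (V, U) is Haar distributed on U(N) x U(N), i.e. V and U are independent
   Haar unitaries: (V,U) takes values in U(N) x U(N) and its law is invariant
   under left (and right) multiplication by U(N) x U(N) (tested against all
   continuous functions). *)
Definition haar_pair N (V U : T -> 'M[C]_N) : Prop :=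
  [/\ random_mx V, random_mx U,
      (forall w, unitary (V w) /\ unitary (U w)) &
      forall W1 W2 W3 W4 : 'M[C]_N,
        unitary W1 -> unitary W2 -> unitary W3 -> unitary W4 ->
        forall g : ('M[C]_N * 'M[C]_N)%type -> R, continuous g ->
        (\int[P]_w (g (W1 *m V w *m W2, W3 *m U w *m W4))%:E
         = \int[P]_w (g (V w, U w))%:E)%E ].

(* kap is the family of (expected) matricial cumulants of the (possibly
   random) tuple X = (X_1,..,X_n), computed with the Haar unitary V, which
   is assumed independent of X: for all multi-indices a b,
   E[(V X_1 V^* ) (x) .. (x) (V X_n V^* )]_(a,b)
      = \sum_s N^{-|s|} kap s (s)_(a,b).
   For deterministic X (constant functions) these are the matricial
   cumulants kappa^N_s(X). *)
Definition cumulants_wrt N (V : T -> 'M[C]_N) n (X : 'I_n -> T -> 'M[C]_N)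
    (kap : 'S_n -> C) : Prop :=
  forall a b : {ffun 'I_n -> 'I_N},
    Cexpect (fun w => tensor_mx (fun i => conj_by (V w) (X i w)) a b)
    = \sum_(s : 'S_n) (N%:R^-1) ^+ (perm_len s) * kap s * perm_op s a b.

End Prob.

Definition mixed_tuple N k l n (A : 'I_k -> 'M[C]_N) (B : 'I_l -> 'M[C]_N)
   {T : Type} (U : T -> 'M[C]_N) (c : 'I_n -> ('I_k + 'I_l)%type) :
   'I_n -> T -> 'M[C]_N :=
  fun i w => match c i with
             | inl a => A a
             | inr b => conj_by (U w) (B b)
             end.

Definition is_from_A k l (x : ('I_k + 'I_l)%type) : bool :=
  if x is inl _ then true else false.

End Defs.

(* Main.v *)
Require Import Defs.
From HB Require Import structures.
From mathcomp Require Import all_boot all_order all_algebra all_fingroup.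
From mathcomp Require Import complex.
From mathcomp Require Import all_classical all_reals all_analysis.
From mathcomp Require Import ring lra zify.
Import Order.TTheory GRing.Theory Num.Theory.
Import numFieldTopology.Exports numFieldNormedType.Exports.
Local Open Scope ring_scope.

Module W1.
Local Open Scope ring_scope.

Section Gen.
Variable R : realType.
Local Notation C := (R[i]).
Local Notation Re := (@complex.Re R).
Local Notation Im := (@complex.Im R).

Lemma cReM (x y : C) : Re (x * y) = Re x * Re y - Im x * Im y.
Proof. by case: x => a b; case: y => c d. Qed.
Lemma cImM (x y : C) : Im (x * y) = Re x * Im y + Im x * Re y.
Proof. by case: x => a b; case: y => c d. Qed.
Lemma cReD (x y : C) : Re (x + y) = Re x + Re y.
Proof. by case: x => a b; case: y => c d. Qed.
Lemma cImD (x y : C) : Im (x + y) = Im x + Im y.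
Proof. by case: x => a b; case: y => c d. Qed.
Lemma cReJ (x : C) : Re (conjc x) = Re x.
Proof. by case: x. Qed.
Lemma cImJ (x : C) : Im (conjc x) = - Im x.
Proof. by case: x. Qed.

Section Alg.
Variables (S : Type) (Q : (S -> R) -> Prop).
Hypotheses (Qc : forall c, Q (fun _ => c))
 (QD : forall f g, Q f -> Q g -> Q (fun s => f s + g s))
 (QM : forall f g, Q f -> Q g -> Q (fun s => f s * g s))
 (QN : forall f, Q f -> Q (fun s => - f s)).

Definition CQ (f : S -> C) := Q (fun s => Re (f s)) /\ Q (fun s => Im (f s)).

Lemma CQc c : CQ (fun _ => c).
Proof. by split; apply: Qc. Qed.

Lemma CQD f g : CQ f -> CQ g -> CQ (fun s => f s + g s).
Proof.
move=> [f1 f2] [g1 g2]; split.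
  by under boolp.eq_fun do rewrite cReD; apply: QD.
by under boolp.eq_fun do rewrite cImD; apply: QD.
Qed.

Lemma CQM f g : CQ f -> CQ g -> CQ (fun s => f s * g s).
Proof.
move=> [f1 f2] [g1 g2]; split.
  by under boolp.eq_fun do rewrite cReM; apply: QD; [apply: QM|apply: QN; apply: QM].
by under boolp.eq_fun do rewrite cImM; apply: QD; apply: QM.
Qed.

Lemma CQJ f : CQ f -> CQ (fun s => conjc (f s)).
Proof.
move=> [f1 f2]; split.
  by under boolp.eq_fun do rewrite cReJ.
by under boolp.eq_fun do rewrite cImJ; apply: QN.
Qed.

Lemma CQsum (I : Type) (r : seq I) (P : pred I) (F : I -> S -> C) :
  (forall i, CQ (F i)) -> CQ (fun s => \sum_(i <- r | P i) F i s).
Proof.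
move=> HF; elim: r => [|x r IH].
  by under boolp.eq_fun do rewrite big_nil; apply: CQc.
under boolp.eq_fun do rewrite big_cons.
case: (P x) => //; exact: CQD.
Qed.

Lemma CQprod (I : Type) (r : seq I) (P : pred I) (F : I -> S -> C) :
  (forall i, CQ (F i)) -> CQ (fun s => \prod_(i <- r | P i) F i s).
Proof.
move=> HF; elim: r => [|x r IH].
  by under boolp.eq_fun do rewrite big_nil; apply: CQc.
under boolp.eq_fun do rewrite big_cons.
case: (P x) => //; exact: CQM.
Qed.

Definition MQ {N} (Y : S -> 'M[C]_N) := forall i j, CQ (fun s => Y s i j).

Lemma MQc N (M : 'M[C]_N) : MQ (fun _ => M).
Proof. by move=> i j; apply: CQc. Qed.

Lemma MQmul N (Y Z : S -> 'M[C]_N) : MQ Y -> MQ Z -> MQ (fun s => Y s *m Z s).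
Proof.
move=> HY HZ i j; under boolp.eq_fun do rewrite mxE.
by apply: CQsum => k; apply: CQM.
Qed.

Lemma MQadj N (Y : S -> 'M[C]_N) : MQ Y -> MQ (fun s => adjmx (Y s)).
Proof.
move=> HY i j; under boolp.eq_fun do rewrite /adjmx !mxE.
exact: CQJ.
Qed.

Lemma MQconj N (Y : S -> 'M[C]_N) (K : 'M[C]_N) : MQ Y -> MQ (fun s => conj_by (Y s) K).
Proof.
move=> HY; rewrite /conj_by.
by apply: MQmul; [apply: MQmul => //; apply: MQc| apply: MQadj].
Qed.

Lemma CQG N n (P : pred 'I_n) (K : 'I_n -> 'M[C]_N) (a b : 'I_n -> 'I_N)
   (Y : S -> 'M[C]_N) : MQ Y ->
   CQ (fun s => \prod_(i < n | P i) conj_by (Y s) (K i) (a i) (b i)).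
Proof.
move=> HY; apply: CQprod => i; exact: MQconj.
Qed.

End Alg.
End Gen.
Arguments CQ {R S} Q f.
Arguments MQ {R S} Q {N} Y.

End W1.
Import W1.

Module W2.
Local Open Scope ring_scope.
Local Open Scope complex_scope.

Section Inst.
Variable R : realType.
Local Notation C := (R[i]).
Local Notation Re := (@complex.Re R).
Local Notation Im := (@complex.Im R).

Lemma normRe_le (z : C) : `|Re z| <= Num.sqrt (Re z ^+ 2 + Im z ^+ 2).
Proof.
rewrite -sqrtr_sqr; apply: ler_wsqrtr; rewrite lerDl; exact: sqr_ge0.
Qed.
Lemma normIm_le (z : C) : `|Im z| <= Num.sqrt (Re z ^+ 2 + Im z ^+ 2).
Proof.
rewrite -sqrtr_sqr; apply: ler_wsqrtr; rewrite lerDr; exact: sqr_ge0.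
Qed.

Lemma Re_continuous : continuous (fun z : C => Re z).
Proof.
move=> z s /= /(nbhs_ballP (Re z)) [e e0 es]; apply/nbhs_ballP.
exists (real_complex R e); first by rewrite /= ltcR.
move=> w Hw; apply: es.
move: Hw; rewrite /ball /= normc_def ltcR => H.
apply: le_lt_trans H.
have -> : Re z - Re w = Re (z - w) by case: z; case: w.
exact: normRe_le.
Qed.

Lemma Im_continuous : continuous (fun z : C => Im z).
Proof.
move=> z s /= /(nbhs_ballP (Im z)) [e e0 es]; apply/nbhs_ballP.
exists (real_complex R e); first by rewrite /= ltcR.
move=> w Hw; apply: es.
move: Hw; rewrite /ball /= normc_def ltcR => H.
apply: le_lt_trans H.
have -> : Im z - Im w = Im (z - w) by case: z; case: w.
exact: normIm_le.
Qed.
End Inst.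

Section Inst2.
Variable R : realType.
Local Notation C := (R[i]).
Local Notation Re := (@complex.Re R).
Local Notation Im := (@complex.Im R).

Definition Qcont (S : topologicalType) (f : S -> R) := continuous f.
Arguments Qcont {S} f.

Lemma Qcont_c (S : topologicalType) c : Qcont (fun _ : S => c).
Proof. exact: cst_continuous. Qed.
Lemma Qcont_D (S : topologicalType) f g : Qcont f -> Qcont g -> Qcont (fun s : S => f s + g s).
Proof. by move=> hf hg x; exact: (continuousD (hf x) (hg x)). Qed.
Lemma Qcont_M (S : topologicalType) f g : Qcont f -> Qcont g -> Qcont (fun s : S => f s * g s).
Proof. by move=> hf hg x; exact: (continuousM (hf x) (hg x)). Qed.
Lemma Qcont_N (S : topologicalType) f : Qcont f -> Qcont (fun s : S => - f s).
Proof. by move=> hf x; exact: (continuousN (hf x)). Qed.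

Lemma MQcont_fst N : MQ (@Qcont _) (fun p : 'M[C]_N * 'M[C]_N => p.1).
Proof.
move=> i j; split => p.
- apply: (@continuous_comp _ _ _ (fun p : 'M[C]_N * 'M[C]_N => p.1 i j) (fun z => Re z)); last exact: Re_continuous.
  apply: (@continuous_comp _ _ _ fst (fun M : 'M[C]_N => M i j)); first exact: cvg_fst.
  exact: coord_continuous.
- apply: (@continuous_comp _ _ _ (fun p : 'M[C]_N * 'M[C]_N => p.1 i j) (fun z => Im z)); last exact: Im_continuous.
  apply: (@continuous_comp _ _ _ fst (fun M : 'M[C]_N => M i j)); first exact: cvg_fst.
  exact: coord_continuous.
Qed.

Lemma MQcont_snd N : MQ (@Qcont _) (fun p : 'M[C]_N * 'M[C]_N => p.2).
Proof.
move=> i j; split => p.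
- apply: (@continuous_comp _ _ _ (fun p : 'M[C]_N * 'M[C]_N => p.2 i j) (fun z => Re z)); last exact: Re_continuous.
  apply: (@continuous_comp _ _ _ snd (fun M : 'M[C]_N => M i j)); first exact: cvg_snd.
  exact: coord_continuous.
- apply: (@continuous_comp _ _ _ (fun p : 'M[C]_N * 'M[C]_N => p.2 i j) (fun z => Im z)); last exact: Im_continuous.
  apply: (@continuous_comp _ _ _ snd (fun M : 'M[C]_N => M i j)); first exact: cvg_snd.
  exact: coord_continuous.
Qed.

Definition Qmeas d (S : measurableType d) (f : S -> R) := measurable_fun setT f.
Arguments Qmeas {d S} f.

Lemma Qmeas_c d (S : measurableType d) c : Qmeas (fun _ : S => c).
Proof. exact: measurable_cst. Qed.
Lemma Qmeas_D d (S : measurableType d) f g : Qmeas f -> Qmeas g -> Qmeas (fun s : S => f s + g s).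
Proof. by move=> hf hg; apply: measurable_realfun.measurable_funD. Qed.
Lemma Qmeas_M d (S : measurableType d) f g : Qmeas f -> Qmeas g -> Qmeas (fun s : S => f s * g s).
Proof. by move=> hf hg; apply: measurable_realfun.measurable_funM. Qed.
Lemma Qmeas_N d (S : measurableType d) f : Qmeas f -> Qmeas (fun s : S => - f s).
Proof.
move=> hf; have -> : (fun s : S => - f s) = (fun s => (cst (-1) s) * f s).
  by apply: boolp.funext => s; rewrite /cst mulN1r.
by apply: measurable_realfun.measurable_funM => //; apply: measurable_cst.
Qed.

Lemma MQmeas_rand d (S : measurableType d) N (X : S -> 'M[C]_N) :
  random_mx X -> MQ (@Qmeas _ _) X.
Proof. by move=> H i j; have [] := H i j. Qed.

Definition Qbnd (S : Type) (D : S -> Prop) (f : S -> R) :=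
  exists K, forall s, D s -> `|f s| <= K.
Arguments Qbnd {S} D f.

Lemma Qbnd_c S D c : Qbnd (S:=S) D (fun _ => c).
Proof. by exists `|c|. Qed.
Lemma Qbnd_D S D f g : Qbnd (S:=S) D f -> Qbnd D g -> Qbnd D (fun s => f s + g s).
Proof.
move=> [K1 H1] [K2 H2]; exists (K1 + K2) => s Ds.
apply: le_trans (ler_normD _ _) _; exact: lerD (H1 _ Ds) (H2 _ Ds).
Qed.
Lemma Qbnd_M S D f g : Qbnd (S:=S) D f -> Qbnd D g -> Qbnd D (fun s => f s * g s).
Proof.
move=> [K1 H1] [K2 H2]; exists (K1 * K2) => s Ds.
rewrite normrM; apply: ler_pM => //; [exact: H1|exact: H2].
Qed.
Lemma Qbnd_N S D f : Qbnd (S:=S) D f -> Qbnd D (fun s => - f s).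
Proof. by move=> [K H]; exists K => s Ds; rewrite normrN; apply: H. Qed.

End Inst2.
Arguments Qcont {R S} f.
Arguments Qmeas {R d S} f.
Arguments Qbnd {R S} D f.
Arguments MQmeas_rand {R d S N X}.
Arguments MQcont_fst {R N}.
Arguments MQcont_snd {R N}.

End W2.
Import W2.

Module W3.
Local Open Scope ring_scope.

Section Unit.
Variable R : realType.
Local Notation C := (R[i]).
Local Notation Re := (@complex.Re R).
Local Notation Im := (@complex.Im R).

Lemma Re_sum (I : Type) (r : seq I) (P : pred I) (F : I -> C) :
  Re (\sum_(i <- r | P i) F i) = \sum_(i <- r | P i) Re (F i).
Proof. by apply: (big_morph Re (@cReD R)). Qed.
Lemma Im_sum (I : Type) (r : seq I) (P : pred I) (F : I -> C) :
  Im (\sum_(i <- r | P i) F i) = \sum_(i <- r | P i) Im (F i).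
Proof. by apply: (big_morph Im (@cImD R)). Qed.

Lemma Re_mulJ (z : C) : Re (z * conjc z) = Re z ^+ 2 + Im z ^+ 2.
Proof. by case: z => a b /=; rewrite mulrN opprK !expr2. Qed.

Variable N : nat.
Implicit Types X Y Z : 'M[C]_N.

Lemma adjmxM X Y : adjmx (X *m Y) = adjmx Y *m adjmx X.
Proof. by rewrite /adjmx (map_mxM (@conjc R : {rmorphism C -> C})) trmx_mul. Qed.

Lemma adjmxK X : adjmx (adjmx X) = X.
Proof. by apply/matrixP => i j; rewrite /adjmx !mxE conjcK. Qed.

Lemma adjmx1 : adjmx (1%:M : 'M[C]_N) = 1%:M.
Proof. by rewrite /adjmx (map_mx1 (@conjc R : {rmorphism C -> C})) trmx1. Qed.

Lemma unitaryP {X} : unitary X -> X *m adjmx X = 1%:M.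
Proof. by move/eqP. Qed.

Lemma unitaryP' {X} : unitary X -> adjmx X *m X = 1%:M.
Proof. by move/eqP/mulmx1C. Qed.

Lemma unitary1 : unitary (1%:M : 'M[C]_N).
Proof. by rewrite /unitary adjmx1 mulmx1. Qed.

Lemma unitaryM X Y : unitary X -> unitary Y -> unitary (X *m Y).
Proof.
move=> hX hY; apply/eqP; rewrite adjmxM mulmxA -(mulmxA X) (unitaryP hY) mulmx1.
exact: unitaryP.
Qed.

Lemma unitary_adj X : unitary X -> unitary (adjmx X).
Proof. by move=> hX; apply/eqP; rewrite adjmxK; apply: unitaryP'. Qed.

Lemma conj_byM X Y K : conj_by (X *m Y) K = conj_by X (conj_by Y K).
Proof. by rewrite /conj_by adjmxM !mulmxA. Qed.

Lemma unitary_entry X i j : unitary X -> `|Re (X i j)| <= 1 /\ `|Im (X i j)| <= 1.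
Proof.
move=> /unitaryP /matrixP /(_ i i); rewrite !mxE eqxx /=.
move=> /(congr1 Re); rewrite Re_sum /=.
under eq_bigr do rewrite /adjmx !mxE Re_mulJ.
rewrite (bigD1 j) //= => H.
have H0 : 0 <= \sum_(k < N | k != j) (Re (X i k) ^+ 2 + Im (X i k) ^+ 2).
  by apply: sumr_ge0 => k _; apply: addr_ge0; apply: sqr_ge0.
have s1 := sqr_ge0 (Re (X i j)); have s2 := sqr_ge0 (Im (X i j)).
have H1 : Re (X i j) ^+ 2 <= 1 by lra.
have H2 : Im (X i j) ^+ 2 <= 1 by lra.
split; rewrite ler_norml; apply/andP; split; nra.
Qed.

Lemma MQbnd_unit (S : Type) (D : S -> Prop) (Y : S -> 'M[C]_N) :
  (forall s, D s -> unitary (Y s)) -> MQ (Qbnd D) Y.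
Proof.
move=> HY i j; split; exists 1 => s Ds; have [] := unitary_entry (Y s) i j (HY s Ds) => //.
Qed.

End Unit.
Arguments MQbnd_unit {R N S D Y}.
Arguments unitaryM {R N X Y}.
Arguments unitary_adj {R N X}.
Arguments unitary1 {R N}.
Arguments unitaryP {R N X}.
Arguments unitaryP' {R N X}.

End W3.
Import W3.

Module W4.
Local Open Scope ring_scope.

Section Integ.
Variables (R : realType) (d : measure_display) (T : measurableType d) (P : probability T R).
Local Notation C := (R[i]).
Local Notation Re := (@complex.Re R).
Local Notation Im := (@complex.Im R).

Definition Qall (S : Type) := fun _ : S => True.

Lemma bounded_of d' (S : measurableType d') (f : S -> R) :
  Qbnd (@Qall S) f -> [bounded f x | x in setT].
Proof.
move=> [K HK]; exists K; split; first exact: num_real.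
move=> M KM x _ /=; apply: le_trans (ltW KM); exact: HK.
Qed.

Lemma integrable_of (f : T -> R) : Qmeas f -> Qbnd (@Qall T) f ->
  P.-integrable setT (EFin \o f).
Proof.
move=> mf bf; apply: measurable_bounded_integrable => //.
  by rewrite -[(_ < _)%E]/(P setT < +oo)%E (probability_setT P) ltry.
exact: bounded_of.
Qed.

Lemma Rint_cst (c : R) : \int[P]_(w in setT) c = c.
Proof. by rewrite Rintegral_cst // -[fine _]/(fine (P setT)) (probability_setT P) /= mulr1. Qed.

Lemma Rint_fin (f : T -> R) : Qmeas f -> Qbnd (@Qall T) f ->
  (\int[P]_w (f w)%:E)%E = (\int[P]_(w in setT) f w)%:E.
Proof.
move=> mf bf; rewrite /Rintegral fineK //; apply: integrable_fin_num.
  by []. exact: integrable_of.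
Qed.

Lemma RFubini (f : T * T -> R) : Qmeas f -> Qbnd (@Qall _) f ->
  (forall x, Qmeas (fun y => f (x, y))) -> (forall y, Qmeas (fun x => f (x, y))) ->
  \int[P]_(x in setT) (\int[P]_(y in setT) f (x, y)) =
  \int[P]_(y in setT) (\int[P]_(x in setT) f (x, y)).
Proof.
move=> mf [K HK] m1 m2.
have b1 x : Qbnd (@Qall T) (fun y => f (x, y)) by exists K => y _; apply: HK.
have b2 y : Qbnd (@Qall T) (fun x => f (x, y)) by exists K => x _; apply: HK.
have Hint : (P \x P)%E.-integrable setT (EFin \o f).
  apply: measurable_bounded_integrable => //.
    rewrite -[(_ < _)%E]/(((P \x P)%E setT) < +oo)%E -setXTT.
    rewrite (@product_measure1E _ _ _ _ _ P P setT setT measurableT measurableT).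
    have H1 : (P : {measure set T -> \bar R}) setT = 1%E := probability_setT P.
    have H2 : (P : {sigma_finite_measure set T -> \bar R}) setT = 1%E := probability_setT P.
    by rewrite H1 H2 mule1 ltry.
  by apply: bounded_of; exists K.
have := Fubini Hint.
under eq_integral do rewrite /= (Rint_fin _ (m1 _) (b1 _)).
under [X in _ = X -> _]eq_integral do rewrite /= (Rint_fin _ (m2 _) (b2 _)).
by rewrite /Rintegral => ->.
Qed.

End Integ.
Arguments integrable_of {R d T} P {f}.
Arguments Rint_cst {R d T} P c.
Arguments Rint_fin {R d T} P {f}.
Arguments RFubini {R d T} P {f}.

End W4.
Import W4.

Module W5.
Local Open Scope ring_scope.

Section CInteg.
Variables (R : realType) (d : measure_display) (T : measurableType d) (P : probability T R).
Local Notation C := (R[i]).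
Local Notation Re := (@complex.Re R).
Local Notation Im := (@complex.Im R).

Lemma complex_ext (z w : C) : Re z = Re w -> Im z = Im w -> z = w.
Proof. by case: z => a b; case: w => c e /= -> ->. Qed.

Lemma Cexpect_cst (c : C) : Cexpect P (fun _ => c) = c.
Proof. by apply: complex_ext; [exact: Rint_cst|exact: Rint_cst]. Qed.

Lemma Cexpect_mulr (f : T -> C) (c : C) : CQ Qmeas f -> CQ (Qbnd (@Qall T)) f ->
  Cexpect P (fun w => f w * c) = Cexpect P f * c.
Proof.
move=> [m1 m2] [b1 b2].
have i1 := integrable_of P m1 b1; have i2 := integrable_of P m2 b2.
have i1' r : P.-integrable setT (EFin \o (fun w => Re (f w) * r)).
  by apply: integrable_of; [apply: Qmeas_M => //; apply: Qmeas_c| apply: Qbnd_M => //; apply: Qbnd_c].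
have i2' r : P.-integrable setT (EFin \o (fun w => Im (f w) * r)).
  by apply: integrable_of; [apply: Qmeas_M => //; apply: Qmeas_c| apply: Qbnd_M => //; apply: Qbnd_c].
apply: complex_ext.
- rewrite cReM.
  change (\int[P]_(w in setT) Re (f w * c) = (\int[P]_(w in setT) Re (f w)) * Re c - (\int[P]_(w in setT) Im (f w)) * Im c).
  rewrite (@eq_Rintegral _ _ _ P setT (fun w => Re (f w) * Re c - Im (f w) * Im c) (fun w => Re (f w * c))); last by move=> w _; rewrite cReM.
  by rewrite RintegralB // !RintegralZr.
- rewrite cImM.
  change (\int[P]_(w in setT) Im (f w * c) = (\int[P]_(w in setT) Re (f w)) * Im c + (\int[P]_(w in setT) Im (f w)) * Re c).
  rewrite (@eq_Rintegral _ _ _ P setT (fun w => Re (f w) * Im c + Im (f w) * Re c) (fun w => Im (f w * c))); last by move=> w _; rewrite cImM.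
  by rewrite RintegralD // !RintegralZr.
Qed.

Lemma Cexpect_mull (f : T -> C) (c : C) : CQ Qmeas f -> CQ (Qbnd (@Qall T)) f ->
  Cexpect P (fun w => c * f w) = c * Cexpect P f.
Proof.
move=> h1 h2; rewrite mulrC -Cexpect_mulr //.
by congr Cexpect; apply: boolp.funext => w; rewrite mulrC.
Qed.

Lemma CFubini (Phi : T -> T -> C) :
  CQ Qmeas (fun z : T * T => Phi z.1 z.2) ->
  CQ (Qbnd (@Qall _)) (fun z : T * T => Phi z.1 z.2) ->
  (forall x, CQ Qmeas (Phi x)) -> (forall y, CQ Qmeas (fun x => Phi x y)) ->
  Cexpect P (fun x => Cexpect P (Phi x)) = Cexpect P (fun y => Cexpect P (fun x => Phi x y)).
Proof.
move=> [m1 m2] [b1 b2] hx hy; apply: complex_ext => /=.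
- exact: (RFubini P (f := fun z => Re (Phi z.1 z.2)) m1 b1 (fun x => (hx x).1) (fun y => (hy y).1)).
- exact: (RFubini P (f := fun z => Im (Phi z.1 z.2)) m2 b2 (fun x => (hx x).2) (fun y => (hy y).2)).
Qed.

Lemma Cinv N (V U : T -> 'M[C]_N) : haar_pair P V U ->
  forall W1 W2 W3 W4 : 'M[C]_N, unitary W1 -> unitary W2 -> unitary W3 -> unitary W4 ->
  forall Phi : 'M[C]_N -> 'M[C]_N -> C,
  CQ Qcont (fun p : 'M[C]_N * 'M[C]_N => Phi p.1 p.2) ->
  Cexpect P (fun w => Phi (W1 *m V w *m W2) (W3 *m U w *m W4)) =
  Cexpect P (fun w => Phi (V w) (U w)).
Proof.
move=> [_ _ _ H] W1 W2 W3 W4 u1 u2 u3 u4 Phi [c1 c2].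
rewrite /Cexpect; congr Complex; congr fine.
- exact: (H _ _ _ _ u1 u2 u3 u4 (fun p => Re (Phi p.1 p.2)) c1).
- exact: (H _ _ _ _ u1 u2 u3 u4 (fun p => Im (Phi p.1 p.2)) c2).
Qed.

End CInteg.
Arguments Cexpect_cst {R d T} P c.
Arguments Cexpect_mulr {R d T} P {f} c.
Arguments Cexpect_mull {R d T} P {f} c.
Arguments CFubini {R d T} P {Phi}.
Arguments Cinv {R d T} P {N V U}.

End W5.
Import W5.

Module W6.
Local Open Scope ring_scope.

Section Alg2.
Variable R : realType.
Local Notation C := (R[i]).

Definition Qalg (S : Type) (Q : (S -> R) -> Prop) :=
  [/\ forall c, Q (fun _ => c), (forall f g, Q f -> Q g -> Q (fun s => f s + g s)),
      (forall f g, Q f -> Q g -> Q (fun s => f s * g s)) &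
      (forall f, Q f -> Q (fun s => - f s))].
Arguments Qalg {S} Q.

Lemma Qalg_meas d (S : measurableType d) : Qalg (@Qmeas R d S).
Proof. split; [exact: Qmeas_c|exact: Qmeas_D|exact: Qmeas_M|exact: Qmeas_N]. Qed.
Lemma Qalg_cont (S : topologicalType) : Qalg (@Qcont R S).
Proof. split; [exact: Qcont_c|exact: Qcont_D|exact: Qcont_M|exact: Qcont_N]. Qed.
Lemma Qalg_bnd (S : Type) (D : S -> Prop) : Qalg (@Qbnd R S D).
Proof. split; [exact: Qbnd_c|exact: Qbnd_D|exact: Qbnd_M|exact: Qbnd_N]. Qed.

Variables (S : Type) (Q : (S -> R) -> Prop) (hQ : Qalg Q).

Lemma MQmul' N (Y Z : S -> 'M[C]_N) : MQ Q Y -> MQ Q Z -> MQ Q (fun s => Y s *m Z s).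
Proof. by case: hQ => a b c e; apply: MQmul. Qed.
Lemma MQc' N (M : 'M[C]_N) : MQ Q (fun _ => M).
Proof. by case: hQ => a b c e; apply: MQc. Qed.
Lemma CQM' f g : CQ Q f -> CQ Q g -> CQ Q (fun s => f s * g s).
Proof. by case: hQ => a b c e; apply: CQM. Qed.
Lemma CQc' c : CQ Q (fun _ => c).
Proof. by case: hQ => a b c' e; apply: CQc. Qed.

End Alg2.
Arguments Qalg {R S} Q.

Section Nice.
Variables (R : realType) (N : nat).
Local Notation C := (R[i]).
Local Notation M := ('M[C]_N).

Definition nice (g : M -> C) := forall (S : Type) (Q : (S -> R) -> Prop), Qalg Q ->
  forall Y : S -> M, MQ Q Y -> CQ Q (fun s => g (Y s)).

Lemma niceG n (P : pred 'I_n) (K : 'I_n -> M) (a b : 'I_n -> 'I_N) :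
  nice (fun Y => \prod_(i < n | P i) conj_by Y (K i) (a i) (b i)).
Proof. move=> S Q [q1 q2 q3 q4] Y HY; exact: CQG. Qed.

Lemma nice_comp (g : M -> C) (D : M) : nice g -> nice (fun Y => g (D *m Y)).
Proof. move=> hg S Q hQ Y HY; apply: (hg S Q hQ (fun s => D *m Y s)); apply: MQmul' => //; exact: MQc'. Qed.

End Nice.
Arguments MQmul' {R S Q} hQ {N Y Z}.
Arguments MQc' {R S Q} hQ {N} M.
Arguments CQM' {R S Q} hQ {f g}.
Arguments CQc' {R S Q} hQ c.
Arguments nice {R N} g.
Arguments niceG {R N n} P K a b.
Arguments nice_comp {R N g} D.

End W6.
Import W6.

Module W7.
Local Open Scope ring_scope.

Section Key.
Variables (R : realType) (d : measure_display) (T : measurableType d) (P : probability T R).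
Variables (N : nat) (V U : T -> 'M[R[i]]_N).
Hypothesis H : haar_pair P V U.
Local Notation C := (R[i]).
Local Notation M := ('M[C]_N).

Let hV : random_mx V. Proof. by case: H. Qed.
Let hU : random_mx U. Proof. by case: H. Qed.
Let uV w : unitary (V w). Proof. by case: H => _ _ h _; case: (h w). Qed.
Let uU w : unitary (U w). Proof. by case: H => _ _ h _; case: (h w). Qed.

Lemma rand_fst {X : T -> M} : random_mx X -> random_mx (fun z : T * T => X z.1).
Proof.
move=> hX i j; split.
- exact: (measurableT_comp (hX i j).1 measurable_fst).
- exact: (measurableT_comp (hX i j).2 measurable_fst).
Qed.
Lemma rand_snd {X : T -> M} : random_mx X -> random_mx (fun z : T * T => X z.2).
Proof.
move=> hX i j; split.
- exact: (measurableT_comp (hX i j).1 measurable_snd).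
- exact: (measurableT_comp (hX i j).2 measurable_snd).
Qed.

Let Am := @Qalg_meas R d T.
Let Amm := @Qalg_meas R _ (T * T)%type.
Let Ab := @Qalg_bnd R T (@Qall T).
Let Abb := @Qalg_bnd R (T * T)%type (@Qall (T * T)%type).
Let Ac := @Qalg_cont R (M * M)%type.

Let mV : MQ Qmeas V := MQmeas_rand hV.
Let mU : MQ Qmeas U := MQmeas_rand hU.
Let mV1 : MQ Qmeas (fun z : T * T => V z.1) := MQmeas_rand (rand_fst hV).
Let mV2 : MQ Qmeas (fun z : T * T => V z.2) := MQmeas_rand (rand_snd hV).
Let mU2 : MQ Qmeas (fun z : T * T => U z.2) := MQmeas_rand (rand_snd hU).

Lemma F1 (g h : M -> C) : nice g -> nice h ->
  Cexpect P (fun w => g (V w) * h (V w *m U w)) =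
  Cexpect P (fun w => g (V w)) * Cexpect P (fun w => h (V w *m U w)).
Proof.
move=> hg hh.
set I := Cexpect P (fun w => g (V w) * h (V w *m U w)).
have S1 w1 : Cexpect P (fun w => g (V w *m V w1) * h (V w *m U w)) = I.
  have E := Cinv P H 1%:M (V w1) (adjmx (V w1)) 1%:M unitary1 (uV w1)
    (unitary_adj (uV w1)) unitary1 (fun x y => g x * h (x *m y)).
  rewrite /I -E; last first.
    apply: (CQM' Ac).
      exact: (hg _ _ Ac (fun p : M * M => p.1) MQcont_fst).
    apply: (hh _ _ Ac (fun p : M * M => p.1 *m p.2)).
    exact: (MQmul' Ac MQcont_fst MQcont_snd).
  congr Cexpect; apply: boolp.funext => w /=.
  by rewrite mul1mx mulmx1 !mulmxA -(mulmxA (V w)) (unitaryP (uV w1)) mulmx1.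
have S2 : I = Cexpect P (fun w1 => Cexpect P (fun w2 => g (V w2 *m V w1) * h (V w2 *m U w2))).
  rewrite -{1}(Cexpect_cst P I); congr Cexpect; apply: boolp.funext => w1.
  by rewrite S1.
rewrite S2 (CFubini P); last first.
- move=> y; apply: (CQM' Am); last exact: CQc'.
  apply: (hg _ _ Am (fun x => V y *m V x)).
  exact: (MQmul' Am (MQc' Am _) mV).
- move=> x; apply: (CQM' Am).
    apply: (hg _ _ Am (fun y => V y *m V x)).
    exact: (MQmul' Am mV (MQc' Am _)).
  apply: (hh _ _ Am (fun y => V y *m U y)).
  exact: (MQmul' Am mV mU).
- apply: (CQM' Abb).
    apply: (hg _ _ Abb (fun z : T * T => V z.2 *m V z.1)).
    by apply: MQbnd_unit => z _; apply: unitaryM.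
  apply: (hh _ _ Abb (fun z : T * T => V z.2 *m U z.2)).
  by apply: MQbnd_unit => z _; apply: unitaryM.
- apply: (CQM' Amm).
    apply: (hg _ _ Amm (fun z : T * T => V z.2 *m V z.1)).
    exact: (MQmul' Amm mV2 mV1).
  apply: (hh _ _ Amm (fun z : T * T => V z.2 *m U z.2)).
  exact: (MQmul' Amm mV2 mU2).
have S4 w2 : Cexpect P (fun w1 => g (V w2 *m V w1) * h (V w2 *m U w2)) =
    Cexpect P (fun w => g (V w)) * h (V w2 *m U w2).
  rewrite (Cexpect_mulr P); last first.
    apply: (hg _ _ Ab (fun w1 => V w2 *m V w1)).
    by apply: MQbnd_unit => z _; apply: unitaryM.
    apply: (hg _ _ Am (fun w1 => V w2 *m V w1)).
    exact: (MQmul' Am (MQc' Am _) mV).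
  congr (_ * _).
  have E := Cinv P H (V w2) 1%:M 1%:M 1%:M (uV w2) unitary1 unitary1 unitary1 (fun x y => g x).
  rewrite -E; last exact: (hg _ _ Ac (fun p : M * M => p.1) MQcont_fst).
  by congr Cexpect; apply: boolp.funext => w /=; rewrite mulmx1.
under eq_fun do rewrite S4.
rewrite (Cexpect_mull P) //.
  apply: (hh _ _ Am (fun w => V w *m U w)).
  exact: (MQmul' Am mV mU).
apply: (hh _ _ Ab (fun w => V w *m U w)).
by apply: MQbnd_unit => z _; apply: unitaryM.
Qed.

Lemma F2 (h : M -> C) : nice h ->
  Cexpect P (fun w => h (V w *m U w)) = Cexpect P (fun w => h (V w)).
Proof.
move=> hh.
set I := Cexpect P (fun w => h (V w *m U w)).
have S1 w1 : Cexpect P (fun w => h (V w *m U w *m V w1)) = I.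
  have E := Cinv P H 1%:M 1%:M 1%:M (V w1) unitary1 unitary1 unitary1 (uV w1)
    (fun x y => h (x *m y)).
  rewrite /I -E; last first.
    apply: (hh _ _ Ac (fun p : M * M => p.1 *m p.2)).
    exact: (MQmul' Ac MQcont_fst MQcont_snd).
  congr Cexpect; apply: boolp.funext => w /=.
  by rewrite !mul1mx !mulmx1 !mulmxA.
have S2 : I = Cexpect P (fun w1 => Cexpect P (fun w2 => h (V w2 *m U w2 *m V w1))).
  rewrite -{1}(Cexpect_cst P I); congr Cexpect; apply: boolp.funext => w1.
  by rewrite S1.
rewrite S2 (CFubini P); last first.
- move=> y; apply: (hh _ _ Am (fun x => V y *m U y *m V x)).
  exact: (MQmul' Am (MQc' Am _) mV).
- move=> x; apply: (hh _ _ Am (fun y => V y *m U y *m V x)).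
  exact: (MQmul' Am (MQmul' Am mV mU) (MQc' Am _)).
- apply: (hh _ _ Abb (fun z : T * T => V z.2 *m U z.2 *m V z.1)).
  by apply: MQbnd_unit => z _; apply: unitaryM => //; apply: unitaryM.
- apply: (hh _ _ Amm (fun z : T * T => V z.2 *m U z.2 *m V z.1)).
  exact: (MQmul' Amm (MQmul' Amm mV2 mU2) mV1).
have S4 w2 : Cexpect P (fun w1 => h (V w2 *m U w2 *m V w1)) =
    Cexpect P (fun w => h (V w)).
  have E := Cinv P H (V w2 *m U w2) 1%:M 1%:M 1%:M (unitaryM (uV w2) (uU w2))
    unitary1 unitary1 unitary1 (fun x y => h x).
  rewrite -E; last exact: (hh _ _ Ac (fun p : M * M => p.1) MQcont_fst).
  by congr Cexpect; apply: boolp.funext => w /=; rewrite mulmx1.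
under eq_fun do rewrite S4.
by rewrite Cexpect_cst.
Qed.

Lemma Zlem (g : M -> C) (D : M) : nice g -> unitary D ->
  (forall x, g (D *m x) = - g x) -> Cexpect P (fun w => g (V w)) = 0.
Proof.
move=> hg uD hD.
have E := Cinv P H D 1%:M 1%:M 1%:M uD unitary1 unitary1 unitary1 (fun x y => g x).
have {}E : Cexpect P (fun w => g (V w) * (-1)) = Cexpect P (fun w => g (V w)).
  rewrite -E; last exact: (hg _ _ Ac (fun p : M * M => p.1) MQcont_fst).
  by congr Cexpect; apply: boolp.funext => w /=; rewrite mulmx1 hD mulrN1.
move: E; rewrite (Cexpect_mulr P); last first.
- apply: (hg _ _ Ab V).
  by apply: MQbnd_unit => z _.
- exact: (hg _ _ Am V mV).
set x := Cexpect P _ => /eqP; rewrite mulrN1 eq_sym -subr_eq0 opprK -mulr2n.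
by rewrite mulrn_eq0 /= => /eqP.
Qed.

End Key.

End W7.
Import W7.

Module W8.
Local Open Scope ring_scope.

Section Comb.
Variables (m n : nat) (s1 : 'S_m) (s2 : 'S_n).
Local Notation t := (tens_perm s1 s2).

Lemma split_l (j : 'I_m) : fintype.split (lshift n j) = inl j.
Proof. exact: (unsplitK (inl _ j)). Qed.
Lemma split_r (j : 'I_n) : fintype.split (rshift m j) = inr j.
Proof. exact: (unsplitK (inr _ j)). Qed.

Lemma tens_l j : t (lshift n j) = lshift n (s1 j).
Proof. by rewrite permE /tens_perm_fun split_l. Qed.
Lemma tens_r j : t (rshift m j) = rshift m (s2 j).
Proof. by rewrite permE /tens_perm_fun split_r. Qed.

Lemma tensX_l k j : (t ^+ k)%g (lshift n j) = lshift n ((s1 ^+ k)%g j).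
Proof. elim: k => [|k IH]; first by rewrite !expg0 !perm1. by rewrite !expgSr !permM IH tens_l. Qed.
Lemma tensX_r k j : (t ^+ k)%g (rshift m j) = rshift m ((s2 ^+ k)%g j).
Proof. elim: k => [|k IH]; first by rewrite !expg0 !perm1. by rewrite !expgSr !permM IH tens_r. Qed.

Lemma porbit_tens_l j : porbit t (lshift n j) = [set lshift n x | x in porbit s1 j].
Proof.
apply/setP => y; apply/porbitP/imsetP.
- by move=> [k ->]; exists ((s1 ^+ k)%g j); [apply/porbitP; exists k | rewrite tensX_l].
- by move=> [x /porbitP [k ->] ->]; exists k; rewrite tensX_l.
Qed.
Lemma porbit_tens_r j : porbit t (rshift m j) = [set rshift m x | x in porbit s2 j].
Proof.
apply/setP => y; apply/porbitP/imsetP.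
- by move=> [k ->]; exists ((s2 ^+ k)%g j); [apply/porbitP; exists k | rewrite tensX_r].
- by move=> [x /porbitP [k ->] ->]; exists k; rewrite tensX_r.
Qed.

Lemma porbits_tens : #|porbits t| = (#|porbits s1| + #|porbits s2|)%N.
Proof.
have linj : injective (lshift n : 'I_m -> 'I_(m + n)) by move=> x y /eqP; rewrite eq_shift => /eqP.
have rinj : injective (@rshift m n) by move=> x y /eqP; rewrite eq_shift => /eqP.
have E : porbits t = [set [set lshift n x | x in A] | A : {set 'I_m} in porbits s1] :|:
                     [set [set rshift m x | x in A] | A : {set 'I_n} in porbits s2].
  apply/setP => Z; apply/imsetP/setUP.
  - move=> [y _ ->]; rewrite -(splitK y); case: (fintype.split y) => j /=.
    + by left; apply/imsetP; exists (porbit s1 j); [apply: imset_f | rewrite porbit_tens_l].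
    + by right; apply/imsetP; exists (porbit s2 j); [apply: imset_f | rewrite porbit_tens_r].
  - case=> /imsetP [A /imsetP [j _ ->] ->].
    + by exists (lshift n j) => //; rewrite porbit_tens_l.
    + by exists (rshift m j) => //; rewrite porbit_tens_r.
rewrite E cardsU (card_imset _ (imset_inj linj)) (card_imset _ (imset_inj rinj)).
suff -> : #|[set [set lshift n x | x in A] | A : {set 'I_m} in porbits s1] :&: [set [set rshift m x | x in A] | A : {set 'I_n} in porbits s2]| = 0%N by rewrite subn0.
apply/eqP; rewrite cards_eq0; apply/eqP/setP => Z; rewrite !inE.
apply/negbTE/negP => /andP [/imsetP [A /imsetP [j _ ->] ->] /imsetP [B /imsetP [k _ ->] EB]].
have : lshift n j \in [set rshift m x | x in porbit s2 k].
  by rewrite -EB; apply: imset_f; exact: porbit_id.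
by case/imsetP => x _ /eqP; rewrite eq_shift.
Qed.

Lemma porbits_le (p : nat) (s : 'S_p) : (#|porbits s| <= p)%N.
Proof. by apply: leq_trans (leq_imset_card _ _) _; rewrite card_ord. Qed.

Lemma perm_len_tens : perm_len t = (perm_len s1 + perm_len s2)%N.
Proof.
rewrite /perm_len porbits_tens.
have h1 := @porbits_le m s1; have h2 := @porbits_le n s2.
lia.
Qed.

End Comb.

End W8.
Import W8.

Module W9.
Local Open Scope ring_scope.

Section Cum.
Variables (R : realType) (d : measure_display) (T : measurableType d) (P : probability T R).
Variables (N : nat) (V : T -> 'M[R[i]]_N).

Lemma cum_entry n (X : 'I_n -> T -> 'M[R[i]]_N) kap : cumulants_wrt P V X kap ->
  forall (a : {ffun 'I_n -> 'I_N}), injective a -> forall s : 'S_n,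
  Cexpect P (fun w => tensor_mx (fun i => conj_by (V w) (X i w)) a [ffun k => a (s k)])
  = (N%:R^-1) ^+ perm_len s * kap s.
Proof.
move=> hc a ia s; rewrite hc (bigD1 s) //= big1 ?addr0.
  rewrite /perm_op.
  have -> : [forall k, a (s k) == [ffun k => a (s k)] k] by apply/forallP => k; rewrite ffunE.
  by rewrite mulr1.
move=> s' ns'; rewrite /perm_op.
have -> : [forall k, a (s' k) == [ffun k => a (s k)] k] = false.
  apply/negbTE/negP => /forallP hk; move/eqP: ns'; apply; apply/permP => k.
  by apply: ia; have := hk k; rewrite ffunE => /eqP.
by rewrite mulr0.
Qed.
End Cum.

Section Flip.
Variables (R : realType) (N : nat) (x0 : 'I_N).
Local Notation C := (R[i]).
Definition dflip : 'rV[C]_N := \row_p (if p == x0 then -1 else 1).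
Local Notation D := (diag_mx dflip).

Lemma conjc_dflip p : conjc (dflip 0 p) = dflip 0 p.
Proof.
rewrite mxE; case: (p == x0).
- by rewrite (rmorphN1 (@conjc R : {rmorphism C -> C})).
- by rewrite conjc1.
Qed.

Lemma dflip_sq p : dflip 0 p * dflip 0 p = 1.
Proof. by rewrite mxE; case: (p == x0); rewrite ?mulrNN mulr1. Qed.

Lemma adj_dflip : adjmx D = D.
Proof.
apply/matrixP => i j; rewrite /adjmx !mxE.
case: (eqVneq i j) => [->|ne].
  by rewrite !mulr1n; have := conjc_dflip j; rewrite mxE.
have ne' : (j == i) = false by rewrite eq_sym (negbTE ne).
by rewrite !mulr0n conjc0.
Qed.

Lemma unitary_dflip : unitary D.
Proof.
apply/eqP; rewrite adj_dflip mulmx_diag -diag_const_mx; congr diag_mx.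
by apply/matrixP => i j; rewrite mxE [RHS]mxE dflip_sq.
Qed.

Lemma conj_by_dflip (Y K : 'M[C]_N) p q :
  conj_by (D *m Y) K p q = dflip 0 p * dflip 0 q * conj_by Y K p q.
Proof.
have -> : conj_by (D *m Y) K = D *m conj_by Y K *m D.
  by rewrite /conj_by adjmxM adj_dflip !mulmxA.
by rewrite mul_mx_diag mxE mul_diag_mx mxE mulrAC.
Qed.
End Flip.

End W9.
Import W9.


Theorem theorem5p4 (R : realType) (d : measure_display) (T : measurableType d)
    (P : probability T R) (N k l : nat)
    (A : 'I_k -> 'M[R[i]]_N) (B : 'I_l -> 'M[R[i]]_N)
    (V U : T -> 'M[R[i]]_N) :
  haar_pair P V U ->
  (* (1) *)
  (forall (n : nat) (c : 'I_n -> ('I_k + 'I_l)%type), (n <= N)%N ->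
     forall Ekap : 'S_n -> R[i],
       cumulants_wrt P V (mixed_tuple A B U c) Ekap ->
       forall s : 'S_n,
         (exists i j : 'I_n, [/\ i != j, i \in porbit s j,
                                 is_from_A (c i) & ~~ is_from_A (c j)]) ->
         Ekap s = 0)
  /\
  (* (2) *)
  (forall (m n : nat) (ca : 'I_m -> 'I_k) (cb : 'I_n -> 'I_l)
          (s1 : 'S_m) (s2 : 'S_n), (m + n <= N)%N ->
     forall (Ekap : 'S_(m + n) -> R[i]) (kapA : 'S_m -> R[i])
            (kapB : 'S_n -> R[i]),
       cumulants_wrt P V
         (mixed_tuple A B U
            (fun i : 'I_(m + n) => match fintype.split i with
                                   | inl j => inl (ca j)
                                   | inr j => inr (cb j)
                                   end)) Ekap ->
       cumulants_wrt P V (fun i (_ : T) => A (ca i)) kapA ->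
       cumulants_wrt P V (fun i (_ : T) => B (cb i)) kapB ->
       Ekap (tens_perm s1 s2) = kapA s1 * kapB s2).
Proof.
move=> H; split.
- move=> n c hn Ekap hE s [i [j [ij isj Ai Bj]]].
  pose a : {ffun 'I_n -> 'I_N} := [ffun k => widen_ord hn k].
  have ia : injective a.
    by move=> x y; rewrite !ffunE => /(congr1 val) /= xy; apply: val_inj.
  have Npos : (0 < N)%N.
    exact: (leq_trans (leq_ltn_trans (leq0n i) (ltn_ord i)) hn).
  pose pA x := is_from_A (c x).
  have [i0 [Ai0 Bsi0]] : exists i0, pA i0 /\ ~~ pA (s i0).
    case: (boolP [exists x, pA x && ~~ pA (s x)]) => [/existsP [x /andP [h1 h2]] | /existsPn Hall].
      by exists x.
    exfalso.
    have cl x : pA x -> pA (s x).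
      by move=> hx; have := Hall x; rewrite hx /= negbK.
    have : j \in porbit s i by rewrite porbit_sym.
    move=> /porbitP [e je].
    have : pA ((s ^+ e)%g i).
      elim: e {je} => [|e IH]; first by rewrite expg0 perm1.
      by rewrite expgSr permM; apply: cl.
    by rewrite -je; move: Bj; rewrite /pA => /negP.
  pose K x := match c x with inl y => A y | inr y => B y end.
  pose b := [ffun x => a (s x)].
  pose g := fun Y : 'M[R[i]]_N => \prod_(x < n | pA x) conj_by Y (K x) (a x) (b x).
  pose h := fun Y : 'M[R[i]]_N => \prod_(x < n | ~~ pA x) conj_by Y (K x) (a x) (b x).
  have hg : nice g := niceG pA K a b.
  have hh : nice h := niceG (fun x => ~~ pA x) K a b.
  have E := @cum_entry _ _ _ P _ V _ _ _ hE a ia s.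
  have Eent : (fun w => tensor_mx (fun i => conj_by (V w) (mixed_tuple A B U c i w)) a b)
      = (fun w => g (V w) * h (V w *m U w)).
    apply: boolp.funext => w; rewrite /tensor_mx (bigID pA) /=; congr (_ * _).
      apply: eq_bigr => x; rewrite /mixed_tuple /K /pA; case: (c x) => [y|y] //=.
    apply: eq_bigr => x; rewrite /mixed_tuple /K /pA; case: (c x) => [y|y] //= _.
    by rewrite conj_byM.
  rewrite Eent (@F1 _ _ _ P _ V U H g h hg hh) in E.
  rewrite (@Zlem _ _ _ P _ V U H g (diag_mx (dflip R N (a (s i0)))) hg (unitary_dflip R N _)) ?mul0r in E.
    move/esym/eqP: E; rewrite mulf_eq0 expf_eq0 invr_eq0 pnatr_eq0 (gtn_eqF Npos) andbF /=.
    by move/eqP.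
  move=> x; rewrite /g.
  under eq_bigr do rewrite conj_by_dflip.
  rewrite big_split big_split /=.
  have -> : \prod_(x < n | pA x) dflip R N (a (s i0)) 0 (a x) = 1.
    apply: big1 => y hy; rewrite mxE; case: eqP => // /ia ys.
    by move: Bsi0; rewrite -ys hy.
  have -> : \prod_(x < n | pA x) dflip R N (a (s i0)) 0 (b x) = -1.
    have bE y : b y = a (s y) by rewrite /b ffunE.
    rewrite (bigD1 i0) //= big1 ?mulr1; first by rewrite bE mxE eqxx.
    move=> y /andP [hy ny]; rewrite bE mxE; case: eqP => // /ia /perm_inj yi0.
    by rewrite yi0 eqxx in ny.
  by rewrite mul1r mulN1r.
- move=> m n ca cb s1 s2 hmn Ekap kapA kapB hE hA hB.
  pose a : {ffun 'I_(m + n) -> 'I_N} := [ffun x => widen_ord hmn x].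
  have ia : injective a.
    by move=> x y; rewrite !ffunE => /(congr1 val) /= xy; apply: val_inj.
  clearbody a.
  pose s := tens_perm s1 s2.
  have E := @cum_entry _ _ _ P _ V _ _ _ hE a ia s.
  pose g := fun Y : 'M[R[i]]_N =>
    \prod_(j < m) conj_by Y (A (ca j)) (a (lshift n j)) (a (lshift n (s1 j))).
  pose h := fun Y : 'M[R[i]]_N =>
    \prod_(j < n) conj_by Y (B (cb j)) (a (rshift m j)) (a (rshift m (s2 j))).
  have hg : nice g := niceG predT (fun j => A (ca j)) (fun j => a (lshift n j)) (fun j => a (lshift n (s1 j))).
  have hh : nice h := niceG predT (fun j => B (cb j)) (fun j => a (rshift m j)) (fun j => a (rshift m (s2 j))).
  have Eent : (fun w => tensor_mx (fun i => conj_by (V w) (mixed_tuple A B U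
            (fun i : 'I_(m + n) => match fintype.split i with
                                   | inl j => inl (ca j)
                                   | inr j => inr (cb j)
                                   end) i w)) a [ffun x => a (s x)])
      = (fun w => g (V w) * h (V w *m U w)).
    apply: boolp.funext => w; rewrite /tensor_mx big_split_ord /=; congr (_ * _).
      by apply: eq_bigr => j _; rewrite /mixed_tuple split_l ffunE /s tens_l.
    by apply: eq_bigr => j _; rewrite /mixed_tuple split_r ffunE /s tens_r conj_byM.
  rewrite Eent (@F1 _ _ _ P _ V U H g h hg hh) (@F2 _ _ _ P _ V U H h hh) in E.
  have EA : Cexpect P (fun w => g (V w)) = (N%:R^-1) ^+ perm_len s1 * kapA s1.
    pose aA : {ffun 'I_m -> 'I_N} := [ffun j => a (lshift n j)].
    have iaA : injective aA.
      by move=> x y; rewrite !ffunE => /ia /eqP; rewrite eq_shift => /eqP.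
    rewrite -(@cum_entry _ _ _ P _ V _ _ _ hA aA iaA s1); congr Cexpect.
    apply: boolp.funext => w; rewrite /tensor_mx /g; apply: eq_bigr => j _.
    by rewrite !ffunE.
  have EB : Cexpect P (fun w => h (V w)) = (N%:R^-1) ^+ perm_len s2 * kapB s2.
    pose aB : {ffun 'I_n -> 'I_N} := [ffun j => a (rshift m j)].
    have iaB : injective aB.
      by move=> x y; rewrite !ffunE => /ia /eqP; rewrite eq_shift => /eqP.
    rewrite -(@cum_entry _ _ _ P _ V _ _ _ hB aB iaB s2); congr Cexpect.
    apply: boolp.funext => w; rewrite /tensor_mx /h; apply: eq_bigr => j _.
    by rewrite !ffunE.
  rewrite EA EB /s perm_len_tens exprD in E.
  have nz : (N%:R^-1 : R[i]) ^+ perm_len s1 * (N%:R^-1) ^+ perm_len s2 != 0.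
    case: (posnP N) => [N0|Npos].
      have h1 := porbits_le s1; have h2 := porbits_le s2.
      have e1 : perm_len s1 = 0%N.
        apply/eqP; rewrite /perm_len subn_eq0.
        by apply: (leq_trans (leq_addr n m)); apply: (leq_trans hmn); rewrite N0.
      have e2 : perm_len s2 = 0%N.
        apply/eqP; rewrite /perm_len subn_eq0.
        by apply: (leq_trans (leq_addl m n)); apply: (leq_trans hmn); rewrite N0.
      by rewrite e1 e2 !expr0 mulr1 oner_neq0.
    by rewrite mulf_neq0 // expf_neq0 // invr_eq0 pnatr_eq0 -lt0n.
  by apply: (mulfI nz); rewrite -E mulrACA.
Qed.
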